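(* Let $0=p_0<p_1<\cdots<p_M<p_{M+1}=1$, fix a labelled sample $\{(\bm x_j,y_j)\}_{j=1}^N$, and let $c^*$ be a risk model whose $\mathrm{AUNBC}$ is maximal among all risk models on this sample. Then there exist a risk model $c'$ (possibly $c'=c^*$) with $\mathrm{AUNBC}(c')=\mathrm{AUNBC}(c^* )$ and real numbers $q_0,\dots,q_M$ with $q_i\in G_i$ for every $i$, such that $q_iN_i(c')=O_i(c')$ for all $i=0,1,\dots,M$.
   Context: A risk model is any function $c$ assigning to each sample a value $c(\bm x_j)\in[0,1]$. For $i=0,\dots,M$, $\mathrm{TP}_i(c)=\#\{j:c(\bm x_j)\ge p_i,\ y_j=1\}$, $\mathrm{FP}_i(c)=\#\{j:c(\bm x_j)\ge p_i,\ y_j=0\}$, with $\mathrm{TP}_{M+1}=\mathrm{FP}_{M+1}=0$, and $\mathrm{AUNBC}(c)=\frac1N\sum_{i=0}^M(p_{i+1}-p_i)\big(\mathrm{TP}_i(c)-\mathrm{FP}_i(c)\frac{p_i}{1-p_i}\big)$. The risk groups are $G_i=[p_i,p_{i+1})$ for $i=0,\dots,M-1$ and $G_M=[p_M,1]$; $N_i(c)$ is the number of samples with $c(\bm x_j)\in G_i$ and $O_i(c)$ the number of positive samples with $c(\bm x_j)\in G_i$. *)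

(* Defs.v *)
From HB Require Import structures.
From mathcomp Require Import all_boot all_order all_algebra.
From mathcomp Require Import reals.
Set Implicit Arguments. Unset Strict Implicit. Unset Printing Implicit Defensive.
Import Order.TTheory GRing.Theory Num.Theory.
Local Open Scope ring_scope.

(* Thresholds p : nat -> R (only p 0, ..., p (M+1) matter).
   Sample: features x : 'I_N -> X, labels y : 'I_N -> bool (true = positive).
   A risk model is any c : X -> R with values in [0,1]. *)

Definition risk_model (R : realType) (X : Type) (c : X -> R) : Prop :=
  forall z, 0 <= c z <= 1.

Definition TP (R : realType) (X : Type) (N : nat) (x : 'I_N -> X)
  (y : 'I_N -> bool) (p : nat -> R) (c : X -> R) (i : nat) : nat :=
  #|[set j : 'I_N | (p i <= c (x j)) && y j]|.

Definition FP (R : realType) (X : Type) (N : nat) (x : 'I_N -> X)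
  (y : 'I_N -> bool) (p : nat -> R) (c : X -> R) (i : nat) : nat :=
  #|[set j : 'I_N | (p i <= c (x j)) && ~~ y j]|.

Definition AUNBC (R : realType) (X : Type) (N : nat) (x : 'I_N -> X)
  (y : 'I_N -> bool) (M : nat) (p : nat -> R) (c : X -> R) : R :=
  N%:R^-1 * \sum_(i < M.+1)
    (p i.+1 - p i) * ((TP x y p c i)%:R - (FP x y p c i)%:R * (p i / (1 - p i))).

Definition in_group (R : realType) (M : nat) (p : nat -> R) (i : nat) (r : R)
  : bool :=
  if (i < M)%N then (p i <= r) && (r < p i.+1) else (p M <= r) && (r <= 1).

Definition Ngroup (R : realType) (X : Type) (N : nat) (x : 'I_N -> X)
  (M : nat) (p : nat -> R) (c : X -> R) (i : nat) : nat :=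
  #|[set j : 'I_N | in_group M p i (c (x j))]|.

Definition Ogroup (R : realType) (X : Type) (N : nat) (x : 'I_N -> X)
  (y : 'I_N -> bool) (M : nat) (p : nat -> R) (c : X -> R) (i : nat) : nat :=
  #|[set j : 'I_N | in_group M p i (c (x j)) && y j]|.

(* Main.v *)
Require Import Defs.
From HB Require Import structures.
From mathcomp Require Import all_boot all_order all_algebra.
From mathcomp Require Import reals.
From mathcomp Require Import boolp.
From mathcomp Require Import ring lra.
Import Order.TTheory GRing.Theory Num.Theory.
Local Open Scope ring_scope.

Definition ecl (R : realType) {X : Type} (a b : X) : R := (`[< a = b >])%:R.

Lemma ecl_sym (R : realType) (X : Type) (a b : X) : ecl R a b = ecl R b a.
Proof. rewrite /ecl; have -> : `[< a = b >] = `[< b = a >] by apply/asboolP/asboolP. by []. Qed.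

Lemma ecl_ge0 (R : realType) (X : Type) (a b : X) : 0 <= ecl R a b.
Proof. by rewrite /ecl ler0n. Qed.

Definition ncl {R : realType} {X : Type} {N : nat} (x : 'I_N -> X) (v : X) : R :=
  \sum_k ecl R (x k) v.

Lemma ncl_gt0 {R : realType} {X : Type} {N : nat} (x : 'I_N -> X) (j : 'I_N) :
  0 < ncl x (x j) :> R.
Proof.
rewrite /ncl (bigD1 j) //= /ecl.
have -> : `[< x j = x j >] = true by apply/asboolP.
have : 0 <= \sum_(i < N | i != j) (`[< x i = x j >])%:R :> R.
  by apply: sumr_ge0 => i _; rewrite ler0n.
move=> h; rewrite /=; lra.
Qed.

Lemma core (R : realType) (X : Type) (N : nat) (x : 'I_N -> X) (G : X -> R)
  (h : 'I_N -> R) :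
  \sum_j G (x j) * h j =
  \sum_j G (x j) * ((\sum_k ecl R (x k) (x j) * h k) / ncl x (x j)).
Proof.
symmetry.
transitivity (\sum_j \sum_k ecl R (x k) (x j) * (G (x k) * h k / ncl x (x k))).
  apply: eq_bigr => j _; rewrite mulrA mulr_sumr mulr_suml; apply: eq_bigr => k _.
  by rewrite /ecl; case: (asboolP (x k = x j)) => [->|_] /=; ring.
rewrite exchange_big /=; apply: eq_bigr => k _.
rewrite -mulr_suml.
have -> : \sum_i ecl R (x k) (x i) = ncl x (x k).
  by rewrite /ncl; apply: eq_bigr => i _; rewrite ecl_sym.
have hn : 0 < ncl x (x k) :> R := ncl_gt0 x k.
set n := ncl x (x k) in hn *.
by field; rewrite lt0r_neq0.
Qed.

Lemma card_sum (R : realType) (N : nat) (b : 'I_N -> bool) :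
  (#|[set j | b j]|%:R : R) = \sum_j (b j)%:R.
Proof.
rewrite -sum1_card natr_sum big_mkcond; apply: eq_bigr => j _.
by rewrite inE; case: (b j).
Qed.

Lemma tpfp (R : realType) (X : Type) (N : nat) (x : 'I_N -> X) (y : 'I_N -> bool)
  (p : nat -> R) (c : X -> R) (i : nat) (t : R) :
  (TP x y p c i)%:R - (FP x y p c i)%:R * t =
  \sum_j ((p i <= c (x j))%R)%:R * ((y j)%:R - (~~ y j)%:R * t).
Proof.
rewrite /TP /FP !card_sum mulr_suml -sumrB; apply: eq_bigr => j _.
by case: (p i <= c (x j))%R; case: (y j) => /=; ring.
Qed.

Lemma avg_ge (R : realType) (N : nat) (Q : 'I_N -> bool) (c : 'I_N -> R) lo :
  (forall j, Q j -> lo <= c j) -> lo * \sum_j (Q j)%:R <= \sum_j (Q j)%:R * c j.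
Proof.
move=> h; rewrite mulr_sumr; apply: ler_sum => j _.
by case: (boolP (Q j)) => hq /=; [rewrite mulr1 mul1r; exact: h | rewrite !mulr0 mul0r].
Qed.

Lemma avg_le (R : realType) (N : nat) (Q : 'I_N -> bool) (c : 'I_N -> R) hi :
  (forall j, Q j -> c j <= hi) -> \sum_j (Q j)%:R * c j <= hi * \sum_j (Q j)%:R.
Proof.
move=> h; rewrite mulr_sumr; apply: ler_sum => j _.
by case: (boolP (Q j)) => hq /=; [rewrite mulr1 mul1r; exact: h | rewrite !mulr0 mul0r].
Qed.

Lemma avg_lt (R : realType) (N : nat) (Q : 'I_N -> bool) (c : 'I_N -> R) hi j0 :
  Q j0 -> (forall j, Q j -> c j < hi) -> \sum_j (Q j)%:R * c j < hi * \sum_j (Q j)%:R.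
Proof.
move=> h0 h; rewrite mulr_sumr (bigD1 j0) //= [X in _ < X](bigD1 j0) //= h0.
apply: ltr_leD; first by rewrite mulr1 mul1r h.
apply: ler_sum => j _.
by case: (boolP (Q j)) => hq /=; [rewrite mulr1 mul1r; apply/ltW/h | rewrite !mulr0 mul0r].
Qed.

Definition cfrac (R : realType) {X : Type} {N : nat} (x : 'I_N -> X) (y : 'I_N -> bool)
  (v : X) : R := (\sum_k ecl R (x k) v * (y k)%:R) / ncl x v.

Lemma opt_i (R : realType) (X : Type) (N : nat) (x : 'I_N -> X) (y : 'I_N -> bool)
  (P : R) (hP0 : 0 <= P) (hP1 : P < 1) (c : X -> R) :
  \sum_j ((P <= c (x j))%R)%:R * ((y j)%:R - (~~ y j)%:R * (P / (1 - P))) <=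
  \sum_j ((P <= cfrac R x y (x j))%R)%:R * ((y j)%:R - (~~ y j)%:R * (P / (1 - P))).
Proof.
set t := P / (1 - P).
set hh := fun j => (y j)%:R - (~~ y j)%:R * t.
rewrite (@core R X N x (fun v => ((P <= c v)%R)%:R) hh).
rewrite (@core R X N x (fun v => ((P <= cfrac R x y v)%R)%:R) hh).
apply: ler_sum => j _.
have hn : 0 < ncl x (x j) :> R := ncl_gt0 x j.
rewrite /cfrac.
set a := \sum_k ecl R (x k) (x j) * (y k)%:R.
set n := ncl x (x j) in hn *.
have hH : \sum_k ecl R (x k) (x j) * hh k = (a - n * P) / (1 - P).
  have -> : \sum_k ecl R (x k) (x j) * hh k = a * (1 + t) - n * t.
    rewrite /a /n /ncl mulr_suml mulr_suml -sumrB; apply: eq_bigr => k _.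
    by rewrite /hh; case: (y k) => /=; ring.
  rewrite /t; field; rewrite subr_eq0; apply/eqP => h1; rewrite -h1 ltxx in hP1.
  done.
rewrite hH.
have hP1' : 0 < 1 - P by lra.
set G1 := ((P <= c (x j))%R)%:R.
have g0 : 0 <= G1 by rewrite /G1 ler0n.
have g1 : G1 <= 1 by rewrite /G1; case: (P <= c (x j))%R.
rewrite ler_pdivlMr //.
case: (boolP (P * n <= a)) => ha /=.
  rewrite mul1r.
  have hz : 0 <= (a - n * P) / (1 - P) / n.
    by apply: divr_ge0; [apply: divr_ge0; lra | lra].
  nra.
rewrite mul0r.
have hz : 0 <= (n * P - a) / (1 - P) / n.
  by apply: divr_ge0; [apply: divr_ge0; lra | lra].
have -> : (a - n * P) / (1 - P) / n = - ((n * P - a) / (1 - P) / n).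
  by field; apply/andP; split; [rewrite gt_eqF | rewrite gt_eqF].
nra.
Qed.

Lemma cfrac_rm (R : realType) (X : Type) (N : nat) (x : 'I_N -> X) (y : 'I_N -> bool) :
  risk_model (cfrac R x y).
Proof.
move=> v; rewrite /cfrac.
have ha : 0 <= \sum_k ecl R (x k) v * (y k)%:R.
  by apply: sumr_ge0 => k _; apply: mulr_ge0; [exact: ecl_ge0 | rewrite ler0n].
have hn : 0 <= ncl x v :> R by apply: sumr_ge0 => k _; exact: ecl_ge0.
have han : \sum_k ecl R (x k) v * (y k)%:R <= ncl x v.
  apply: ler_sum => k _; have := ecl_ge0 R X (x k) v; case: (y k) => /= h; lra.
apply/andP; split; first exact: divr_ge0.
case: (boolP (ncl x v == 0 :> R)) => hz.
  by rewrite (eqP hz) invr0 mulr0 ler01.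
have hn' : 0 < ncl x v :> R by rewrite lt_neqAle eq_sym hz hn.
by rewrite ler_pdivrMr // mul1r.
Qed.

Lemma p_facts (R : realType) (M : nat) (p : nat -> R)
  (hp0 : p 0%N = 0) (hp1 : p M.+1 = 1)
  (hpinc : forall i : nat, (i <= M)%N -> p i < p i.+1) :
  forall i, (i <= M)%N -> 0 <= p i /\ p i < 1.
Proof.
have mono : forall i k, (i <= k)%N -> (k <= M.+1)%N -> p i <= p k.
  move=> i k; elim: k => [|k IH].
    by rewrite leqn0 => /eqP -> _.
  rewrite leq_eqVlt => /orP [/eqP -> //|hik] hk.
  apply: (le_trans (IH hik (ltnW hk))); apply/ltW/hpinc; by [].
move=> i hi; split.
  by rewrite -hp0; apply: mono => //; apply: ltnW.
rewrite -hp1; apply: (lt_le_trans (hpinc i hi)); exact: mono.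
Qed.

Theorem corollary2 (R : realType) (X : Type) (N : nat)
  (x : 'I_N -> X) (y : 'I_N -> bool) (M : nat) (p : nat -> R)
  (hp0 : p 0%N = 0) (hp1 : p M.+1 = 1)
  (hpinc : forall i : nat, (i <= M)%N -> p i < p i.+1)
  (cstar : X -> R) (hcstar : risk_model cstar)
  (hmax : forall c : X -> R, risk_model c -> AUNBC x y M p c <= AUNBC x y M p cstar) :
  exists (c' : X -> R) (q : nat -> R),
    [/\ risk_model c',
        AUNBC x y M p c' = AUNBC x y M p cstar
      & forall i : nat, (i <= M)%N ->
          in_group M p i (q i) /\
          q i * (Ngroup x M p c' i)%:R = (Ogroup x y M p c' i)%:R].
Proof.
have pf := @p_facts R M p hp0 hp1 hpinc.
set c' := cfrac R x y.
have rm : risk_model c' := cfrac_rm R X N x y.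
have opt : forall c, AUNBC x y M p c <= AUNBC x y M p c'.
  move=> c; rewrite /AUNBC; apply: ler_wpM2l; first by rewrite invr_ge0 ler0n.
  apply: ler_sum => i _.
  have hi : (i <= M)%N by rewrite -ltnS ltn_ord.
  have [h0 h1] := pf i hi.
  apply: ler_wpM2l; first by have := hpinc i hi; lra.
  rewrite !tpfp; exact: opt_i.
exists c', (fun i => if (Ngroup x M p c' i == 0)%N then p i
                      else (Ogroup x y M p c' i)%:R / (Ngroup x M p c' i)%:R).
split => //.
  by apply/le_anti; rewrite hmax // opt.
move=> i hi.
set Q := fun j => in_group M p i (c' (x j)).
have hN : (Ngroup x M p c' i)%:R = \sum_j (Q j)%:R :> R by rewrite /Ngroup card_sum.
have hO : (Ogroup x y M p c' i)%:R = \sum_j (Q j)%:R * c' (x j) :> R.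
  rewrite /Ogroup card_sum.
  transitivity (\sum_j (Q j)%:R * (y j)%:R :> R).
    by apply: eq_bigr => j _; rewrite -natrM mulnb.
  rewrite (@core R X N x (fun v => (in_group M p i (c' v))%:R) (fun j => (y j)%:R)).
  by [].
have [h0 h1] := pf i hi.
case: ifP => hz.
  split.
    rewrite /in_group; case: ifP => hiM.
      by rewrite lexx /= hpinc.
    have := hpinc M (leqnn M); rewrite hp1 => hM.
    have -> : i = M by apply/eqP; rewrite eqn_leq hi /= leqNgt hiM.
    by rewrite lexx /= ltW.
  have : (Ogroup x y M p c' i <= Ngroup x M p c' i)%N.
    by apply: subset_leq_card; apply/subsetP => j; rewrite !inE => /andP[].
  by rewrite (eqP hz) leqn0 => /eqP ->; rewrite mulr0.
have hNz : (Ngroup x M p c' i)%:R != 0 :> R by rewrite pnatr_eq0 hz.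
split; last by rewrite divfK.
have hpos : 0 < \sum_j (Q j)%:R :> R.
  by rewrite -hN lt0r hNz ler0n.
have [j0 hj0] : exists j0, Q j0.
  have : (0 < Ngroup x M p c' i)%N by rewrite lt0n hz.
  by case/card_gt0P => j; rewrite inE => hj; exists j.
rewrite hO hN.
rewrite /in_group; case: ifP => hiM.
  apply/andP; split.
    rewrite ler_pdivlMr //; apply: avg_ge => j; rewrite /Q /in_group hiM.
    by case/andP.
  rewrite ltr_pdivrMr //; apply: (@avg_lt R N Q _ _ j0 hj0) => j; rewrite /Q /in_group hiM.
  by case/andP.
have hQ : forall j, Q j -> p M <= c' (x j) <= 1.
  by move=> j; rewrite /Q /in_group hiM.
apply/andP; split.
  rewrite ler_pdivlMr //; apply: avg_ge => j /hQ; by case/andP.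
rewrite ler_pdivrMr // mul1r; have := @avg_le R N Q (fun j => c' (x j)) 1.
by rewrite mul1r; apply => j /hQ /andP[].
Qed.
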